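(* (i) For each $n$, $\mathcal{T}_n$ is a transparent spread, and if $n>0$ then $\mathcal{I}(\mathcal{T}_n)=\{\alpha\in\mathcal{T}_n\mid\exists p[\alpha(p)+1=n]\}$ and $\mathcal{L}(\mathcal{T}_n)=\mathcal{T}_{n-1}$. (ii) For all $n$ and all $m>0$, $\mathcal{T}_n=\{\alpha\in\mathcal{T}_{n+m}\mid(\mathcal{T}_{n+m},=)\models\bigwedge_{i<m}\neg D_i[\alpha]\}$. (iii) For all $m$, $\{\underline{0}\}=\mathcal{T}_1=\{\alpha\in\mathcal{T}_{m+1}\mid(\mathcal{T}_{m+1},=)\models\bigwedge_{i<m}\neg D_i[\alpha]\}$. (iv) For all $n>0$ and $m>0$, $(\mathcal{T}_n,=)\models\psi_m$ if and only if $m+1\le n$. (v) For all $n>0$ and $m>0$, $(\mathcal{T}_n,=)\models\rho_m$ if and only if $m+1=n$.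
   Context: Intuitionistic mathematics (constructive reading of logical constants; Markov's Principle not assumed), with Brouwer's Continuity Principle as an axiom (for every $R\subseteq\mathcal{N}\times\omega$, if $\forall\alpha\exists n[\alpha Rn]$ then $\forall\alpha\exists m\exists n\forall\beta[\overline{\alpha}m\sqsubset\beta\rightarrow\beta Rn]$). $\mathcal{N}=\omega^\omega$; $\overline{\alpha}n=\langle\alpha(0),\dots,\alpha(n-1)\rangle$; $s\sqsubset\alpha$: $s$ is an initial segment of $\alpha$; $\alpha\perp\delta$ iff $\exists n[\alpha(n)\neq\delta(n)]$. $\mathcal{F}_\beta:=\{\alpha\mid\forall n[\beta(\overline{\alpha}n)=0]\}$; $Spr(\beta)$ iff $\forall s[\beta(s)=0\leftrightarrow\exists n[\beta(s\ast\langle n\rangle)=0]]$. $\mathcal{T}_n:=\{\alpha\mid\forall i[\alpha(i)\le\alpha(i+1)<n]\}$ (a spread; $\mathcal{T}_0=\emptyset$, $\mathcal{T}_1=\{\underline{0}\}$). For a spread $\mathcal{F}$: $\alpha\in\mathcal{F}$ is isolated iff $\exists n\forall\gamma\in\mathcal{F}[\overline{\alpha}n\sqsubset\gamma\rightarrow\alpha=\gamma]$, $\mathcal{I}(\mathcal{F})$ is the set of isolated points; $\alpha\in\mathcal{F}$ is a limit point iff $\forall n\exists\delta\in\mathcal{F}[\overline{\alpha}n\sqsubset\delta\wedge\alpha\perp\delta]$, $\mathcal{L}(\mathcal{F})$ is the set of limit points. For $Spr(\beta)$, $\mathcal{F}_\beta$ is transparent iff there is $\gamma$ with $Spr(\gamma)$,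 $\mathcal{F}_\gamma=\mathcal{L}(\mathcal{F}_\beta)$ and $\forall\alpha\in\mathcal{F}_\beta[\exists n[\gamma(\overline{\alpha}n)\neq0]\rightarrow\alpha\in\mathcal{I}(\mathcal{F}_\beta)]$. Formulas (language with only $=$): $D_0(\mathsf{x}):=\forall\mathsf{y}[\mathsf{x}=\mathsf{y}\vee\neg(\mathsf{x}=\mathsf{y})]$ and, for $m>0$, $D_m(\mathsf{x}):=\bigwedge_{i<m}\neg D_i(\mathsf{x})\wedge\forall\mathsf{y}[\bigwedge_{i<m}\neg D_i(\mathsf{y})\rightarrow(\mathsf{x}=\mathsf{y}\vee\neg(\mathsf{x}=\mathsf{y}))]$; for $m>0$, $\psi_m:=\exists\mathsf{x}[D_m(\mathsf{x})]$ and $\rho_m:=\exists\mathsf{x}[D_m(\mathsf{x})\wedge\forall\mathsf{y}[D_m(\mathsf{y})\rightarrow\mathsf{y}=\mathsf{x}]]$. An empty conjunction is true. Satisfaction is read intuitionistically, $=$ interpreted as equality of sequences. *)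

(* Defs.v *)
From Stdlib Require Import List Arith.
Import ListNotations.

(* Baire space N = omega^omega; finite sequences are coded as lists. *)
Definition Seq := nat -> nat.

Definition eqs (a b : Seq) : Prop := forall n, a n = b n.

Definition apart (a d : Seq) : Prop := exists n, a n <> d n.

Definition zero_seq : Seq := fun _ => 0.

Fixpoint prefix (a : Seq) (n : nat) : list nat :=
  match n with
  | 0 => []
  | S k => prefix a k ++ [a k]
  end.

Definition initseg (s : list nat) (a : Seq) : Prop := s = prefix a (length s).

Definition BCP : Prop :=
  forall R : Seq -> nat -> Prop,
    (forall a, exists n, R a n) ->
    forall a, exists m n, forall b, initseg (prefix a m) b -> R b n.

Definition Fb (beta : list nat -> nat) (a : Seq) : Prop :=
  forall n, beta (prefix a n) = 0.

Definition Spr (beta : list nat -> nat) : Prop :=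
  forall s, beta s = 0 <-> exists n, beta (s ++ [n]) = 0.

Definition T (n : nat) (a : Seq) : Prop :=
  forall i, a i <= a (S i) /\ a (S i) < n.

Definition Isol (F : Seq -> Prop) (a : Seq) : Prop :=
  F a /\ exists n, forall g, F g -> initseg (prefix a n) g -> eqs a g.

Definition Lim (F : Seq -> Prop) (a : Seq) : Prop :=
  F a /\ forall n, exists d, F d /\ initseg (prefix a n) d /\ apart a d.

Definition IsSpread (F : Seq -> Prop) : Prop :=
  exists beta, Spr beta /\ forall a, Fb beta a <-> F a.

Definition Transparent (F : Seq -> Prop) : Prop :=
  exists gamma, Spr gamma /\ (forall a, Fb gamma a <-> Lim F a) /\
    forall a, F a -> (exists n, gamma (prefix a n) <> 0) -> Isol F a.

(* Satisfaction in the structure (X, =), X a set of sequences.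
   ND X m x  =  /\_{i<m} ~ D_i(x)   (empty conjunction = True) *)
Definition decEq (x y : Seq) : Prop := eqs x y \/ ~ eqs x y.

Fixpoint ND (X : Seq -> Prop) (m : nat) (x : Seq) : Prop :=
  match m with
  | 0 => True
  | S k => ND X k x /\
           ~ (match k with
              | 0 => forall y, X y -> decEq x y
              | S _ => ND X k x /\ forall y, X y -> ND X k y -> decEq x y
              end)
  end.

Definition D (X : Seq -> Prop) (m : nat) (x : Seq) : Prop :=
  match m with
  | 0 => forall y, X y -> decEq x y
  | S _ => ND X m x /\ forall y, X y -> ND X m y -> decEq x y
  end.

Definition psi (X : Seq -> Prop) (m : nat) : Prop :=
  exists x, X x /\ D X m x.

Definition rho (X : Seq -> Prop) (m : nat) : Prop :=
  exists x, X x /\ D X m x /\ forall y, X y -> D X m y -> eqs y x.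

(* Main.v *)
Require Import Defs.
From Stdlib Require Import List Arith Lia Bool.
Import ListNotations.

Fixpoint okb (n:nat) (s:list nat) : bool :=
  match s with
  | [] => true
  | x :: t => (x <? n) && (match t with [] => true | y :: _ => x <=? y end) && okb n t
  end.

Lemma okb_app n s k : okb n (s ++ [k]) = okb n s && (k <? n) && (last s k <=? k).
Proof.
  induction s as [|x t IH].
  - simpl. rewrite Nat.leb_refl. destruct (k <? n); reflexivity.
  - destruct t as [|y t'].
    + simpl. destruct (x <? n), (x <=? k), (k <? n), (k <=? k); reflexivity.
    + rewrite <- app_comm_cons.
      change (okb n (x :: ((y :: t') ++ [k]))) with
        ((x <? n) && (x <=? y) && okb n ((y :: t') ++ [k])).
      rewrite IH.
      change (okb n (x :: y :: t')) with ((x <? n) && (x <=? y) && okb n (y :: t')).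
      change (last (x :: y :: t') k) with (last (y :: t') k).
      destruct (x <? n), (x <=? y), (okb n (y :: t')), (k <? n), (last (y :: t') k <=? k);
        reflexivity.
Qed.

Lemma length_prefix a m : length (prefix a m) = m.
Proof. induction m; simpl; [reflexivity|]. rewrite length_app, IHm; simpl; lia. Qed.

Lemma okb_prefix n a m : okb n (prefix a m) = true <->
  (forall i, i < m -> a i < n) /\ (forall i, S i < m -> a i <= a (S i)).
Proof.
  induction m.
  - simpl. split; [intros _; split; intros; lia | auto].
  - simpl prefix. rewrite okb_app.
    assert (HL : forall d, m > 0 -> last (prefix a m) d = a (m - 1)).
    { intros d Hm. destruct m; [lia|]. simpl prefix. rewrite last_last. f_equal; lia. }
    rewrite !andb_true_iff, IHm, Nat.ltb_lt, Nat.leb_le.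
    split.
    + intros [[[H1 H2] H3] H4]. split.
      * intros i Hi. destruct (Nat.eq_dec i m); [subst; auto|]. apply H1; lia.
      * intros i Hi. destruct (Nat.eq_dec (S i) m).
        -- subst. rewrite HL in H4 by lia. replace (S i - 1) with i in H4 by lia. auto.
        -- apply H2; lia.
    + intros [H1 H2]. split; [split; [split|]|].
      * intros; apply H1; lia.
      * intros; apply H2; lia.
      * apply H1; lia.
      * destruct m; [simpl; lia|]. rewrite HL by lia.
        replace (S m - 1) with m by lia. apply H2; lia.
Qed.

Lemma okb_last n s d : okb n s = true -> d < n -> last s d < n.
Proof.
  induction s as [|x t IH]; simpl; auto.
  intros H Hd. destruct t as [|y t'].
  - rewrite !andb_true_iff, Nat.ltb_lt in H. tauto.
  - apply IH; auto. rewrite !andb_true_iff in H. tauto.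
Qed.

Definition beta (n : nat) (s : list nat) : nat :=
  if andb (0 <? n) (okb n s) then 0 else 1.

Lemma T_pos n a : T n a -> 0 < n.
Proof. intros H. specialize (H 0). lia. Qed.

Lemma T_lt n a : T n a -> forall i, a i < n.
Proof. intros H i. destruct i; [specialize (H 0)|specialize (H i)]; lia. Qed.

Lemma T_mono n m a : T n a -> n <= m -> T m a.
Proof. intros H Hm i. specialize (H i). lia. Qed.

Lemma Fb_T n a : Fb (beta n) a <-> T n a.
Proof.
  unfold Fb, beta. split.
  - intros H i. specialize (H (S (S i))).
    destruct (andb (0 <? n) (okb n (prefix a (S (S i))))) eqn:E; [|discriminate].
    apply andb_true_iff in E. destruct E as [_ E].
    apply okb_prefix in E. destruct E as [E1 E2].
    split; [apply E2|apply E1]; lia.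
  - intros H m. assert (0 < n) by (eapply T_pos; eauto).
    assert (Hm : okb n (prefix a m) = true).
    { apply okb_prefix. split; intros; [apply (T_lt n a H)|apply H]. }
    rewrite Hm. destruct (0 <? n) eqn:E; [reflexivity|]. apply Nat.ltb_ge in E; lia.
Qed.

Lemma Spr_beta n : Spr (beta n).
Proof.
  intros s. unfold beta.
  split.
  - intros H. exists (n - 1).
    destruct (andb (0 <? n) (okb n s)) eqn:E; [|discriminate].
    apply andb_true_iff in E. destruct E as [E1 E2]. apply Nat.ltb_lt in E1.
    rewrite okb_app, E2.
    assert (last s (n-1) < n) by (apply okb_last; auto; lia).
    replace (n - 1 <? n) with true by (symmetry; apply Nat.ltb_lt; lia).
    replace (last s (n - 1) <=? n - 1) with true by (symmetry; apply Nat.leb_le; lia).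
    replace (0 <? n) with true by (symmetry; apply Nat.ltb_lt; lia); reflexivity.
  - intros [k Hk].
    destruct (andb (0 <? n) (okb n (s ++ [k]))) eqn:E; [|discriminate].
    rewrite okb_app in E. apply andb_true_iff in E. destruct E as [E1 E2].
    rewrite !andb_true_iff in E2. rewrite E1. simpl. destruct E2 as [[E2 _] _].
    rewrite E2. reflexivity.
Qed.

Definition cut (a : Seq) (m n : nat) : Seq := fun j => if j <? m then a j else n - 1.

Lemma cut_T n a m : T n a -> T n (cut a m n).
Proof.
  intros H i. pose proof (T_pos _ _ H). pose proof (T_lt _ _ H i).
  unfold cut. destruct (Nat.ltb_spec i m), (Nat.ltb_spec (S i) m);
    try (split; lia); try lia.
  apply H.
Qed.

Lemma prefix_ext a b m : (forall k, k < m -> a k = b k) -> prefix a m = prefix b m.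
Proof.
  induction m; simpl; auto. intros H. rewrite IHm by (intros; apply H; lia).
  rewrite H by lia. reflexivity.
Qed.

Lemma prefix_eq_pt a b m : prefix a m = prefix b m -> forall k, k < m -> a k = b k.
Proof.
  induction m; simpl; intros H k Hk; [lia|].
  apply app_inj_tail in H. destruct H as [H1 H2].
  destruct (Nat.eq_dec k m); [subst; auto|]. apply IHm; auto; lia.
Qed.

Lemma initseg_iff a b m : initseg (prefix a m) b <-> forall k, k < m -> a k = b k.
Proof.
  unfold initseg. rewrite length_prefix. split.
  - apply prefix_eq_pt.
  - apply prefix_ext.
Qed.

Lemma const_after n a p : T n a -> a p + 1 = n -> forall j, p <= j -> a j + 1 = n.
Proof.
  intros H Hp j. induction j; intros Hj.
  - replace p with 0 in Hp by lia. auto.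
  - destruct (Nat.eq_dec p (S j)); [subst; auto|].
    specialize (IHj ltac:(lia)). specialize (H j). lia.
Qed.

Lemma isol_nbhd n a p : T n a -> a p + 1 = n -> forall g, T n g ->
  (forall k, k <= p -> a k = g k) -> eqs a g.
Proof.
  intros H Hp g Hg Hk j.
  destruct (le_lt_dec j p); [auto|].
  assert (g p + 1 = n) by (rewrite <- Hk; auto).
  pose proof (const_after _ _ _ H Hp j ltac:(lia)).
  pose proof (const_after _ _ _ Hg H0 j ltac:(lia)). lia.
Qed.

Lemma agree_dec (x y : Seq) p : (forall k, k <= p -> x k = y k) \/ (exists k, x k <> y k).
Proof.
  induction p.
  - destruct (Nat.eq_dec (x 0) (y 0)).
    + left. intros k Hk. replace k with 0 by lia. auto.
    + right. eauto.
  - destruct IHp as [H|H]; [|right; auto].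
    destruct (Nat.eq_dec (x (S p)) (y (S p))).
    + left. intros k Hk. destruct (Nat.eq_dec k (S p)); [subst; auto|]. apply H; lia.
    + right. eauto.
Qed.

Lemma isol_dec M x p : T M x -> x p + 1 = M -> forall y, T M y -> decEq x y.
Proof.
  intros H Hp y Hy. destruct (agree_dec x y p) as [A|[k Hk]].
  - left. eapply isol_nbhd; eauto.
  - right. intros E. apply Hk, E.
Qed.

Fixpoint zb (b : Seq) (j : nat) : bool :=
  match j with 0 => b 0 =? 0 | S j' => zb b j' && (b (S j') =? 0) end.

Definition ys (x : Seq) (M : nat) (b : Seq) : Seq :=
  fun j => if zb b j then x j else M - 1.

Lemma ys_T M x b : T M x -> T M (ys x M b).
Proof.
  intros H i. pose proof (T_pos _ _ H). pose proof (T_lt _ _ H i).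
  pose proof (T_lt _ _ H (S i)).
  unfold ys. simpl zb.
  destruct (zb b i), (b (S i) =? 0); simpl; try (split; lia); try lia; apply H.
Qed.

Lemma zb_zero j : zb zero_seq j = true.
Proof. induction j; simpl; auto. rewrite IHj. reflexivity. Qed.

Lemma zb_nz b j : b j <> 0 -> zb b j = false.
Proof.
  intros H. destruct j; simpl.
  - apply Nat.eqb_neq; auto.
  - replace (b (S j) =? 0) with false by (symmetry; apply Nat.eqb_neq; auto).
    apply andb_false_r.
Qed.

Lemma notD0_iff (bcp : BCP) M x : T M x ->
  (~ (forall y, T M y -> decEq x y) <-> T (M - 1) x).
Proof.
  intros HT. split.
  - intros HN i. split; [apply HT|].
    pose proof (T_lt _ _ HT (S i)).
    destruct (Nat.eq_dec (x (S i) + 1) M).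
    + exfalso. apply HN. eapply isol_dec; eauto.
    + lia.
  - intros H1 HD.
    pose (R := fun b n => (n = 0 /\ eqs (ys x M b) x) \/ (n = 1 /\ ~ eqs (ys x M b) x)).
    assert (HR : forall b, exists n, R b n).
    { intros b. destruct (HD (ys x M b) (ys_T _ _ _ HT)) as [E|E].
      - exists 0. left. split; auto. intros j; symmetry; apply E.
      - exists 1. right. split; auto. intros E'. apply E. intros j; symmetry; apply E'. }
    destruct (bcp R HR zero_seq) as [m [n0 Hm]].
    assert (Hy0 : eqs (ys x M zero_seq) x).
    { intros j. unfold ys. rewrite zb_zero. reflexivity. }
    destruct (Hm zero_seq ltac:(apply initseg_iff; auto)) as [[-> _]|[-> C]];
      [|exact (C Hy0)].
    pose (b := fun k => if k =? m then 1 else 0).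
    assert (Hb : initseg (prefix zero_seq m) b).
    { apply initseg_iff. intros k Hk. unfold b, zero_seq.
      replace (k =? m) with false by (symmetry; apply Nat.eqb_neq; lia). reflexivity. }
    destruct (Hm b Hb) as [[_ E]|[C _]]; [|discriminate].
    specialize (E m). unfold ys in E. rewrite zb_nz in E.
    + pose proof (T_lt _ _ H1 m). lia.
    + unfold b. rewrite Nat.eqb_refl. discriminate.
Qed.

Lemma D_iff_of N k : (forall x, T N x -> (ND (T N) k x <-> T (N - k) x)) ->
  forall x, T N x -> (D (T N) k x <-> T (N - k) x /\ forall y, T (N - k) y -> decEq x y).
Proof.
  intros IH x Hx. destruct k as [|k'].
  - rewrite Nat.sub_0_r. simpl. split; [intros H; split; auto|intros [_ H]; auto].
  - change (D (T N) (S k') x) with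
      (ND (T N) (S k') x /\ forall y, T N y -> ND (T N) (S k') y -> decEq x y).
    rewrite IH by auto. split.
    + intros [H1 H2]. split; auto. intros y Hy.
      apply H2; [eapply T_mono; eauto; lia|]. apply IH; auto. eapply T_mono; eauto; lia.
    + intros [H1 H2]. split; auto. intros y Hy Hy'. apply H2. apply IH; auto.
Qed.

Lemma ND_iff (bcp : BCP) N k : forall x, T N x -> (ND (T N) k x <-> T (N - k) x).
Proof.
  induction k as [|k IH]; intros x Hx.
  - rewrite Nat.sub_0_r. simpl. tauto.
  - change (ND (T N) (S k) x) with (ND (T N) k x /\ ~ D (T N) k x).
    rewrite (D_iff_of N k IH x Hx), IH by auto.
    replace (N - S k) with (N - k - 1) by lia.
    split.
    + intros [H1 H2]. apply (notD0_iff bcp _ _ H1). intros H. apply H2. split; auto.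
    + intros H1. assert (H0 : T (N - k) x) by (eapply T_mono; eauto; lia).
      split; auto. intros [_ H]. apply (notD0_iff bcp _ _ H0) in H1. auto.
Qed.

Lemma D_iff (bcp : BCP) N k x : T N x ->
  (D (T N) k x <-> T (N - k) x /\ forall y, T (N - k) y -> decEq x y).
Proof. apply D_iff_of. apply ND_iff; auto. Qed.

Lemma bounded_dec (a : Seq) m c : (forall i, i < m -> a i < c) \/ (exists i, c <= a i).
Proof.
  induction m.
  - left; intros; lia.
  - destruct IHm as [H|H]; [|right; auto].
    destruct (lt_dec (a m) c).
    + left. intros i Hi. destruct (Nat.eq_dec i m); [subst; auto|]. apply H; lia.
    + right. exists m. lia.
Qed.

Lemma exists_big n a m : T n a -> beta (n - 1) (prefix a m) <> 0 -> exists i, a i + 1 = n.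
Proof.
  intros HT. unfold beta. destruct (0 <? n - 1) eqn:E; simpl.
  - destruct (bounded_dec a m (n - 1)) as [H|[i Hi]].
    + rewrite (proj2 (okb_prefix (n-1) a m)); [congruence|].
      split; auto. intros; apply HT.
    + intros _. exists i. pose proof (T_lt _ _ HT i). lia.
  - intros _. apply Nat.ltb_ge in E. exists 0. pose proof (T_lt _ _ HT 0). lia.
Qed.

Lemma isol_iff n a : 0 < n -> (Isol (T n) a <-> T n a /\ exists p, a p + 1 = n).
Proof.
  intros Hn. split.
  - intros [HT [m Hm]]. split; auto. exists m.
    assert (E : eqs a (cut a m n)).
    { apply Hm; [apply cut_T; auto|]. apply initseg_iff. intros k Hk.
      unfold cut. replace (k <? m) with true by (symmetry; apply Nat.ltb_lt; auto). auto. }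
    specialize (E m). unfold cut in E. rewrite Nat.ltb_irrefl in E. lia.
  - intros [HT [p Hp]]. split; auto. exists (S p). intros g Hg Hi.
    rewrite initseg_iff in Hi. eapply isol_nbhd; eauto. intros k Hk; apply Hi; lia.
Qed.

Lemma lim_iff n a : Lim (T n) a <-> T (n - 1) a.
Proof.
  split.
  - intros [HT HL] i. split; [apply HT|].
    pose proof (T_lt _ _ HT (S i)).
    destruct (Nat.eq_dec (a (S i) + 1) n); [|lia].
    exfalso. destruct (HL (S (S i))) as [d [Hd [Hi [k Hk]]]].
    rewrite initseg_iff in Hi.
    apply Hk. eapply isol_nbhd; eauto. intros k' Hk'; apply Hi; lia.
  - intros H1. pose proof (T_pos _ _ H1).
    split; [eapply T_mono; eauto; lia|].
    intros m. exists (cut a m n). split; [apply cut_T; eapply T_mono; eauto; lia|].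
    split.
    + apply initseg_iff. intros k Hk. unfold cut.
      replace (k <? m) with true by (symmetry; apply Nat.ltb_lt; auto). auto.
    + exists m. unfold cut. rewrite Nat.ltb_irrefl. pose proof (T_lt _ _ H1 m). lia.
Qed.

Definition cst (c : nat) : Seq := fun _ => c.

Lemma cst_T c n : c < n -> T n (cst c).
Proof. intros H i. unfold cst. lia. Qed.

Theorem theorem7p7 (bcp : BCP) :
  (* (i) *)
  (forall n : nat,
     IsSpread (T n) /\ Transparent (T n) /\
     (0 < n ->
        (forall a, Isol (T n) a <-> (T n a /\ exists p, a p + 1 = n)) /\
        (forall a, Lim (T n) a <-> T (n - 1) a))) /\
  (* (ii) *)
  (forall n m : nat, 0 < m ->
     forall a, T n a <-> (T (n + m) a /\ ND (T (n + m)) m a)) /\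
  (* (iii) *)
  (forall m : nat,
     (forall a, eqs a zero_seq <-> T 1 a) /\
     (forall a, T 1 a <-> (T (m + 1) a /\ ND (T (m + 1)) m a))) /\
  (* (iv) *)
  (forall n m : nat, 0 < n -> 0 < m -> (psi (T n) m <-> m + 1 <= n)) /\
  (* (v) *)
  (forall n m : nat, 0 < n -> 0 < m -> (rho (T n) m <-> m + 1 = n)).
Proof.
  assert (Hz : forall a, eqs a zero_seq <-> T 1 a).
  { intros a. split.
    - intros E i. rewrite (E i), (E (S i)). unfold zero_seq. lia.
    - intros H i. pose proof (T_lt _ _ H i). unfold zero_seq. lia. }
  split; [|split; [|split; [|split]]].
  - intros n. split; [|split].
    + exists (beta n). split; [apply Spr_beta|apply Fb_T].
    + exists (beta (n - 1)). split; [apply Spr_beta|]. split.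
      * intros a. rewrite Fb_T, lim_iff. tauto.
      * intros a HT [m Hm]. pose proof (T_pos _ _ HT).
        apply isol_iff; auto. split; auto. eapply exists_big; eauto.
    + intros Hn. split; intros a; [apply isol_iff; auto|apply lim_iff].
  - intros n m _ a. split.
    + intros H. assert (T (n + m) a) by (eapply T_mono; eauto; lia).
      split; auto. apply ND_iff; auto. replace (n + m - m) with n by lia. auto.
    + intros [H1 H2]. apply ND_iff in H2; auto. replace (n + m - m) with n in H2 by lia. auto.
  - intros m. split; [exact Hz|]. intros a. split.
    + intros H. assert (T (m + 1) a) by (eapply T_mono; eauto; lia).
      split; auto. apply ND_iff; auto. replace (m + 1 - m) with 1 by lia. auto.
    + intros [H1 H2]. apply ND_iff in H2; auto. replace (m + 1 - m) with 1 in H2 by lia. auto.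
  - intros n m Hn Hm. split.
    + intros [x [HT HD]]. apply (D_iff bcp) in HD; auto. destruct HD as [H1 _].
      pose proof (T_pos _ _ H1). lia.
    + intros H. exists (cst (n - m - 1)).
      assert (HT : T n (cst (n - m - 1))) by (apply cst_T; lia).
      split; auto. apply (D_iff bcp); auto. split; [apply cst_T; lia|].
      intros y Hy. apply (isol_dec (n - m) _ 0); [apply cst_T; lia|unfold cst; lia|auto].
  - intros n m Hn Hm. split.
    + intros [x [HT [HD Hu]]]. apply (D_iff bcp) in HD; auto. destruct HD as [H1 _].
      pose proof (T_pos _ _ H1).
      destruct (Nat.eq_dec (m + 1) n); auto. exfalso.
      pose (c2 := fun j => if j =? 0 then n - m - 2 else n - m - 1).
      assert (Hc2 : T (n - m) c2).
      { intros i. unfold c2. destruct i; simpl; lia. }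
      assert (E1 : eqs (cst (n - m - 1)) x).
      { apply Hu; [apply cst_T; lia|]. apply (D_iff bcp); [apply cst_T; lia|].
        split; [apply cst_T; lia|]. intros y Hy.
        apply (isol_dec (n - m) _ 0); [apply cst_T; lia|unfold cst; lia|auto]. }
      assert (E2 : eqs c2 x).
      { apply Hu; [eapply T_mono; eauto; lia|]. apply (D_iff bcp); [eapply T_mono; eauto; lia|].
        split; auto. intros y Hy.
        apply (isol_dec (n - m) _ 1); [auto|unfold c2; simpl; lia|auto]. }
      specialize (E1 0). specialize (E2 0). unfold cst, c2 in *. simpl in E2. lia.
    + intros H. exists zero_seq.
      assert (HT : T n zero_seq) by (eapply T_mono; [apply Hz; intro; reflexivity|lia]).
      split; auto.
      replace (n - m) with 1 in * by lia.
      split.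
      * apply (D_iff bcp); auto. replace (n - m) with 1 by lia.
        split; [apply Hz; intro; reflexivity|]. intros y Hy.
        apply (isol_dec 1 _ 0); [apply Hz; intro; reflexivity|unfold zero_seq; lia|auto].
      * intros y Hy HD. apply (D_iff bcp) in HD; auto. destruct HD as [H1 _].
        replace (n - m) with 1 in H1 by lia. apply Hz; auto.
Qed.
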